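(* Let $X$ be a connected vertex-transitive graph all of whose vertices have finite degree, with its path metric, and fix a vertex $x$. (i) If $\lim_{l\to\infty}\frac1l\log|B(x,l)|=0$, then $h_\infty(X)=0$. (ii) If $\limsup_{l\to\infty}\frac1l\log|B(x,l)|>0$, then $h_\infty(X)=\infty$.
   Context: A graph is vertex-transitive if for any two vertices $v,v'$ there is a graph automorphism mapping $v$ to $v'$. The path metric is the minimal number of edges of a path between two vertices; $B(x,l)$ is the closed ball. Coarse entropy $h_\infty(X)=\lim_{\delta\to\infty}\lim_{R\to\infty}\limsup_{n\to\infty}\frac1n\log s(n,R,\delta,x_0)$, where $s(n,R,\delta,x_0)$ is the supremum of cardinalities of $R$-separated sets of $\delta$-paths $(x_0,\dots,x_n)$ ($d(x_i,x_{i+1})\le\delta$) starting at $x_0$, paths compared by $\max_i d(x_i,y_i)$. *)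

(* Defs.v *)
From HB Require Import structures.
From mathcomp Require Import all_boot all_order all_algebra.
From mathcomp Require Import finmap all_classical all_reals all_analysis.
Set Implicit Arguments. Unset Strict Implicit. Unset Printing Implicit Defensive.
Import Order.TTheory GRing.Theory Num.Theory.
Import numFieldNormedType.Exports.
Local Open Scope classical_set_scope.
Local Open Scope ring_scope.

Section Graphs.
Variable V : choiceType.
Variable adj : V -> V -> Prop.

Inductive walk : nat -> V -> V -> Prop :=
| walk0 x : walk 0 x x
| walkS n x y z : adj x y -> walk n y z -> walk n.+1 x z.

Definition graph_connected : Prop := forall x y, exists n, walk n x y.

Definition locally_finite : Prop := forall v, finite_set [set w | adj v w].

Definition simple_graph : Prop :=
  (forall x y, adj x y -> adj y x) /\ (forall x, ~ adj x x).

Definition graph_automorphism (f : V -> V) : Prop :=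
  bijective f /\ (forall a b, adj a b <-> adj (f a) (f b)).

Definition vertex_transitive : Prop :=
  forall v v', exists f, graph_automorphism f /\ f v = v'.

(* path metric: minimal number of edges of a walk (0 if none exists) *)
Definition gdist (x y : V) : nat :=
  match pselect (exists n, `[< walk n x y >]) with
  | left H => ex_minn H
  | right _ => 0%N
  end.

Definition ball_g (x : V) (l : nat) : set V := [set y | (gdist x y <= l)%N].

Variable R : realType.

Definition ball_card (x : V) (l : nat) : R := (#|` fset_set (ball_g x l)|)%fset%:R.

Definition delta_path (n : nat) (delta : R) (x0 : V) (p : {ffun 'I_n.+1 -> V}) : Prop :=
  p ord0 = x0 /\
  forall i : nat, (i < n)%N -> (gdist (p (inord i)) (p (inord i.+1)))%:R <= delta.

Definition path_dist (n : nat) (p q : {ffun 'I_n.+1 -> V}) : R :=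
  \big[Num.max/0]_(i < n.+1) (gdist (p i) (q i))%:R.

Definition separated (n : nat) (Rs : R) (S : set {ffun 'I_n.+1 -> V}) : Prop :=
  forall p q, S p -> S q -> p <> q -> Rs < path_dist p q.

Definition s_count (n : nat) (Rs delta : R) (x0 : V) : \bar R :=
  ereal_sup [set ((#|` fset_set S|)%fset%:R)%:E |
     S in [set S : set {ffun 'I_n.+1 -> V} |
             [/\ finite_set S, S `<=` delta_path delta x0 & separated Rs S]]].

Definition elog (x : \bar R) : \bar R :=
  match x with
  | r%:E => if 0 < r then (ln r)%:E else -oo%E
  | +oo%E => +oo%E
  | -oo%E => -oo%E
  end.

Definition coarse_entropy (x0 : V) : \bar R :=
  lim ((fun delta : R =>
     lim ((fun Rs : R =>
        limn_esup (fun n : nat => ((n%:R)^-1)%:E * elog (s_count n Rs delta x0))%E)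
       @ +oo)) @ +oo).

End Graphs.

(* Main.v *)
Require Import Defs.
From HB Require Import structures.
From mathcomp Require Import all_boot all_order all_algebra.
From mathcomp Require Import finmap all_classical all_reals all_analysis.
From mathcomp Require Import zify ring lra.
Set Implicit Arguments. Unset Strict Implicit. Unset Printing Implicit Defensive.
Import Order.TTheory GRing.Theory Num.Theory.
Import numFieldNormedType.Exports.
Local Open Scope classical_set_scope.
Local Open Scope ring_scope.

Module Aux.
Section G.
Variable V : choiceType.
Variable adj : V -> V -> Prop.
Notation walk := (walk adj).
Notation gdist := (gdist adj).

Lemma walk_trans m n a b c : walk m a b -> walk n b c -> walk (m + n) a c.
Proof. by elim=> [//|k u v w H _ IH] /IH; apply: walkS. Qed.

Lemma walk_split m n a c : walk (m + n) a c -> exists b, walk m a b /\ walk n b c.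
Proof.
elim: m a => [|m IH] a /=; first by exists a; split=> //; apply: walk0.
move=> H; inversion H as [|k u y w Ha Hw]; subst.
have [b [H1 H2]] := IH _ Hw; exists b; split=> //; exact: walkS Ha H1.
Qed.

Lemma gdistP a b n : walk n a b -> (gdist a b <= n)%N /\ walk (gdist a b) a b.
Proof.
move=> W.
rewrite /Defs.gdist; case: pselect => [H|H]; last first.
  exfalso; apply: H; exists n; apply/asboolP; exact W.
case: ex_minnP => m /asboolP Hm Hmin; split => //; apply: Hmin; exact/asboolP.
Qed.

Hypothesis conn : graph_connected adj.

Lemma gdist_walk a b : walk (gdist a b) a b.
Proof. by have [n H] := conn a b; case: (gdistP H). Qed.

Lemma gdist_le a b n : walk n a b -> (gdist a b <= n)%N.
Proof. by case/gdistP. Qed.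

Lemma gdistxx a : gdist a a = 0%N.
Proof. by apply/eqP; rewrite -leqn0; apply: gdist_le; apply: walk0. Qed.

Lemma gdist_eq0 a b : gdist a b = 0%N -> a = b.
Proof. by move=> H; have := gdist_walk a b; rewrite H => W; inversion W. Qed.

Lemma gdist_tri a b c : (gdist a c <= gdist a b + gdist b c)%N.
Proof. apply: gdist_le; apply: walk_trans; exact: gdist_walk. Qed.

Hypothesis symm : forall a b, adj a b -> adj b a.

Lemma walk_sym n a b : walk n a b -> walk n b a.
Proof.
elim=> [u|k u v w H _ IH]; first exact: walk0.
rewrite -addn1; apply: walk_trans IH _; apply: walkS (symm H) (walk0 _ _).
Qed.

Lemma gdistC a b : gdist a b = gdist b a.
Proof. by apply/eqP; rewrite eqn_leq gdist_le ?gdist_le //; apply: walk_sym; exact: gdist_walk. Qed.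

Section Auto.
Variables (f g : V -> V).
Hypotheses (fK : cancel f g) (gK : cancel g f)
  (fadj : forall a b, adj a b <-> adj (f a) (f b)).

Lemma walk_f n a b : walk n a b -> walk n (f a) (f b).
Proof.
elim=> [u|k u v w H _ IH]; first exact: walk0.
exact: (walkS (proj1 (fadj _ _) H) IH).
Qed.

Lemma walk_g n a b : walk n a b -> walk n (g a) (g b).
Proof.
elim=> [u|k u v w H _ IH]; first exact: walk0.
apply: walkS IH; apply/fadj; by rewrite !gK.
Qed.

Lemma gdist_f a b : gdist (f a) (f b) = gdist a b.
Proof.
apply/eqP; rewrite eqn_leq; apply/andP; split.
  by apply: gdist_le; apply: walk_f; exact: gdist_walk.
have := gdist_le (walk_g (gdist_walk (f a) (f b))); by rewrite !fK.
Qed.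
End Auto.

Hypothesis lf : locally_finite adj.

Lemma walk_finite k a : finite_set [set b | walk k a b].
Proof.
elim: k a => [|k IH] a.
  apply: (sub_finite_set _ (finite_set1 a)) => b /= W; by inversion W.
apply: (sub_finite_set _ (bigcup_finite (lf a) (fun y _ => IH y))).
move=> b /= W; inversion W; subst; by exists y.
Qed.

Lemma ball_finite a l : finite_set (ball_g adj a l).
Proof.
have F : finite_set (\bigcup_(k in [set k : nat | (k <= l)%N]) [set b | walk k a b]).
  apply: bigcup_finite => [|k _]; last exact: walk_finite.
  apply: (sub_finite_set _ (finite_II l.+1)) => k /=; by rewrite /= ltnS.
apply: sub_finite_set F => b /= Hb; exists (gdist a b) => //; exact: gdist_walk.
Qed.


Hypothesis vt : vertex_transitive adj.
Variable x : V.

Definition tr (y : V) : V -> V := proj1_sig (cid (vt x y)).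
Lemma trP y : graph_automorphism adj (tr y) /\ tr y x = y.
Proof. exact: (proj2_sig (cid (vt x y))). Qed.

Lemma bij_ex (f : V -> V) : bijective f -> exists g, cancel f g /\ cancel g f.
Proof. by case=> g H1 H2; exists g. Qed.

Definition tri (y : V) : V -> V := proj1_sig (cid (bij_ex (trP y).1.1)).
Lemma triK y : cancel (tr y) (tri y).
Proof. exact: (proj2_sig (cid (bij_ex (trP y).1.1))).1. Qed.
Lemma trK y : cancel (tri y) (tr y).
Proof. exact: (proj2_sig (cid (bij_ex (trP y).1.1))).2. Qed.
Lemma tr_x y : tr y x = y.
Proof. exact: (trP y).2. Qed.

Lemma gdist_tr y a b : gdist (tr y a) (tr y b) = gdist a b.
Proof. apply: (gdist_f (triK y) (trK y)); exact: (trP y).1.2. Qed.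

Lemma gdist_tri_ y a b : gdist (tri y a) (tri y b) = gdist a b.
Proof. by rewrite -(gdist_tr y) !trK. Qed.

Definition bc (a : V) (l : nat) : nat := #|` fset_set (ball_g adj a l)|%fset.

Lemma ball_tr y l : ball_g adj y l = tr y @` ball_g adj x l.
Proof.
apply/seteqP; split => b /=.
  move=> Hb; exists (tri y b); last exact: trK.
  by rewrite /ball_g /= -(gdist_tr y) trK tr_x.
by case=> a Ha <-; rewrite /ball_g /= -{1}(tr_x y) gdist_tr.
Qed.

Lemma bc_tr y l : bc y l = bc x l.
Proof.
rewrite /bc ball_tr fset_set_image; last exact: ball_finite.
rewrite card_in_imfset //= => a b _ _; exact: (can_inj (triK y)).
Qed.

Lemma bc_ge1 a l : (1 <= bc a l)%N.
Proof.
rewrite /bc cardfs_gt0; apply/negP => /eqP H.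
have : a \in fset_set (ball_g adj a l) by rewrite in_fset_set ?inE /ball_g /= ?gdistxx //; exact: ball_finite.
by rewrite H.
Qed.


Lemma cover_card (A : seq V) r (B : {fset V}) :
  (forall b, b \in B -> exists2 a, a \in A & (gdist a b <= r)%N) ->
  (#|` B| <= size A * bc x r)%N.
Proof.
elim: A B => [|a A IH] B HB.
  rewrite mul0n leqn0 cardfs_eq0; apply/eqP/fsetP => b; rewrite inE.
  apply/negbTE/negP => /HB [a]; by rewrite in_nil.
set B1 := [fset b in B | (gdist a b <= r)%N]%fset.
set B2 := [fset b in B | ~~ (gdist a b <= r)%N]%fset.
have -> : B = (B1 `|` B2)%fset.
  by apply/fsetP => b; rewrite !inE; case: (b \in B); case: (_ <= _)%N.
apply: (@leq_trans (#|` B1| + #|` B2|)); first by rewrite -cardfsUI leq_addr.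
rewrite /= mulSn leq_add //.
- rewrite -(bc_tr a r) /bc; apply: fsubset_leq_card; apply/fsubsetP => b.
  rewrite !inE => /andP[_ Hb]; rewrite in_fset_set ?inE //; exact: ball_finite.
- apply: IH => b; rewrite !inE => /andP[Hb Hn]; have [a' Ha' Hd] := HB b Hb.
  move: Ha'; rewrite in_cons => /orP[/eqP E|]; first by rewrite -E Hd in Hn.
  by exists a'.
Qed.

Lemma net_exists (s : seq V) r : exists A : seq V,
  [/\ uniq A, {subset A <= s},
   (forall a b, a \in A -> b \in A -> a != b -> (r < gdist a b)%N) &
   (forall b, b \in s -> exists2 a, a \in A & (gdist a b <= r)%N)].
Proof.
elim: s => [|v s [A [uA sA sepA covA]]].
  by exists [::]; split => // b; rewrite in_nil.
case: (boolP (has (fun a => gdist a v <= r)%N A)) => [/hasP [a Ha Hd]|hn].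
  exists A; split => //.
  - by move=> b /sA Hb; rewrite in_cons Hb orbT.
  - move=> b; rewrite in_cons => /orP[/eqP ->|/covA //]; by exists a.
exists (v :: A); split.
- rewrite /= uA andbT; apply/negP => Hv; move/hasP: hn; apply; exists v => //.
  by rewrite gdistxx.
- by move=> b; rewrite !in_cons => /orP[->//|/sA ->]; rewrite orbT.
- have H1 a : a \in A -> (r < gdist a v)%N.
    by move=> Ha; rewrite ltnNge; apply/negP => Hd; move/hasP: hn; apply; exists a.
  move=> a b; rewrite !in_cons => /orP[/eqP->|Ha] /orP[/eqP->|Hb].
  + by rewrite eqxx.
  + by rewrite gdistC; move=> _; apply: H1.
  + by move=> _; apply: H1.
  + exact: sepA.
- move=> b; rewrite in_cons => /orP[/eqP->|/covA [a Ha Hd]].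
    by exists v; rewrite ?in_cons ?eqxx ?gdistxx.
  by exists a; rewrite ?in_cons ?Ha ?orbT.
Qed.


Variable R : realType.

Lemma inord0 n : (inord 0 : 'I_n.+1) = ord0.
Proof. by apply: val_inj; rewrite /= inordK. Qed.

Lemma path_step (dl : R) D n (p : {ffun 'I_n.+1 -> V}) :
  delta_path adj dl x p -> dl <= D%:R -> forall a b, (a <= b)%N -> (b <= n)%N ->
  (gdist (p (inord a)) (p (inord b)) <= (b - a) * D)%N.
Proof.
move=> [_ Hp] HD a; elim => [|b IH].
  by rewrite leqn0 => /eqP -> _; rewrite gdistxx.
rewrite leq_eqVlt => /orP[/eqP -> _|]; first by rewrite gdistxx.
rewrite ltnS => Hab Hbn.
apply: leq_trans (gdist_tri _ (p (inord b)) _) _.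
have H1 : (gdist (p (inord b)) (p (inord b.+1)) <= D)%N.
  by rewrite -(ler_nat R); apply: le_trans (Hp _ Hbn) HD.
apply: leq_trans (leq_add (IH Hab (ltnW Hbn)) H1) _.
by rewrite subSn // mulSn addnC.
Qed.

Lemma fin_card (T : finType) (A : {fset T}) : (#|` A| <= #|T|)%N.
Proof. have := max_card (mem (enum_fset A)). by rewrite (card_uniqP (fset_uniq A)). Qed.

Lemma insub_inj_fset (B : {fset V}) a b : a \in B -> b \in B ->
  (insub a : option B) = insub b -> a = b.
Proof.
move=> Ha Hb; case: insubP => [u _ Hu|]; last by rewrite Ha.
case: insubP => [u' _ Hu'|]; last by rewrite Hb.
by case=> E; rewrite -Hu -Hu' E.
Qed.

Lemma count_upper (dl Rs : R) D m n (S : set {ffun 'I_n.+1 -> V}) :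
  (0 < m)%N -> dl <= D%:R -> ((m.-1 * D).*2)%:R <= Rs -> finite_set S ->
  S `<=` delta_path adj dl x -> Defs.separated adj Rs S ->
  (#|` fset_set S| <= (bc x (m * D)).+1 ^ (n %/ m)%N)%N.
Proof.
move=> m0 HD HR Sfin Sd Ssep.
set k := (n %/ m)%N.
set B := fset_set (ball_g adj x (m * D)).
pose z (p : {ffun 'I_n.+1 -> V}) j := p (inord (j * m)).
pose phi (p : {ffun 'I_n.+1 -> V}) : {ffun 'I_k -> option B} :=
  [ffun j : 'I_k => insub (tri (z p j) (z p j.+1))].
have kmn j : (j <= k)%N -> (j * m <= n)%N.
  by move=> jk; apply: leq_trans (leq_mul jk (leqnn m)) _; rewrite leq_trunc_div.
have inB p j : S p -> (j < k)%N -> tri (z p j) (z p j.+1) \in B.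
  move=> Sp jk; rewrite /B in_fset_set ?inE; last exact: ball_finite.
  rewrite /ball_g /= -{1}(triK (z p j) x) tr_x gdist_tri_.
  have H := kmn j.+1 jk; rewrite mulSn in H.
  move: (path_step (Sd _ Sp) HD (leq_addl m (j * m)) H).
  by rewrite /z mulSn addnK.
have zeq p q : S p -> S q -> phi p = phi q -> forall j, (j <= k)%N -> z p j = z q j.
  move=> Sp Sq E; elim => [_|j IH jk].
    by rewrite /z mul0n inord0 (Sd _ Sp).1 (Sd _ Sq).1.
  have jk' : (j < k)%N by [].
  have := congr1 (fun f : {ffun 'I_k -> option B} => f (Ordinal jk')) E; rewrite !ffunE /=.
  move/(insub_inj_fset (inB p j Sp jk') (inB q j Sq jk')).
  rewrite -(IH (ltnW jk)); exact: (can_inj (trK (z p j))).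
have phi_inj : {in fset_set S &, injective phi}.
  move=> p q; rewrite !in_fset_set // !inE => Sp Sq E.
  apply/eqP; apply/negP => /negP /eqP pq.
  have := Ssep _ _ Sp Sq pq; apply/negP; rewrite -leNgt.
  apply: le_trans HR; rewrite /path_dist; apply: bigmax_le => //= i _.
  rewrite ler_nat.
  have ji : (i %/ m * m <= i)%N by rewrite leq_trunc_div.
  have jk : (i %/ m <= k)%N by apply: leq_div2r; rewrite -ltnS.
  have im : (i - i %/ m * m <= m.-1)%N.
    rewrite -ltnS prednK // ltn_subLR //; first by rewrite -mulSnr ltn_ceil.
  have Hi p' : S p' -> (gdist (p' i) (z p' (i %/ m)%N) <= m.-1 * D)%N.
    move=> Sp'; rewrite gdistC /z.
    have -> : p' i = p' (inord i) by rewrite inord_val.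
    have iN : (i <= n)%N by rewrite -ltnS.
    apply: leq_trans (path_step (Sd _ Sp') HD ji iN) _.
    exact: leq_mul.
  apply: (leq_trans (gdist_tri (p i) (z p (i %/ m)%N) (q i))).
  rewrite -addnn leq_add ?Hi // (zeq p q Sp Sq E _ jk) gdistC; exact: Hi.
apply: (@leq_trans #|` [fset phi p | p in fset_set S]%fset|).
  by rewrite card_in_imfset.
apply: leq_trans (fin_card _) _.
rewrite card_ffun card_option card_ord.
by rewrite -cardfE.
Qed.


Lemma mod_pred_div i T : (0 < T)%N -> (T %| i.+1)%N -> (i %% T = T.-1)%N.
Proof.
move=> T0 /dvdnP [[|q] Hq]; first by rewrite mul0n in Hq.
have -> : i = (q * T + T.-1)%N by move: Hq; rewrite mulSn; lia.
by rewrite modnMDl modn_small // ltn_predL.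
Qed.

Lemma geo_walk D T : forall L a b, walk L b a -> (L <= T * D)%N ->
  exists g : nat -> V, [/\ g 0%N = b, g T = a &
     forall t, (t < T)%N -> (gdist (g t) (g t.+1) <= D)%N].
Proof.
elim: T => [|T IH] L a b W HL.
  move: HL; rewrite mul0n leqn0 => /eqP HL; subst L; inversion W; subst.
  by exists (fun _ => a); split.
set L1 := minn L (T * D).
have HL1 : (L = L1 + (L - L1))%N by rewrite subnKC // geq_minl.
rewrite HL1 in W; have [c [W1 W2]] := walk_split W.
have [g [g0 gT gs]] := IH _ c b W1 (geq_minr _ _).
exists (fun t => if t == T.+1 then a else g t); split => //.
- by rewrite eqxx.
- move=> t; rewrite ltnS leq_eqVlt => /orP[/eqP->|tT].
    rewrite eqxx (ltn_eqF (ltnSn T)) gT; apply: leq_trans (gdist_le W2) _.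
    rewrite /L1; move: HL; rewrite mulSn; lia.
  have h1 : (t < T.+1)%N by apply: leq_trans tT _.
  have h2 : (t.+1 < T.+1)%N by [].
  by rewrite (ltn_eqF h1) (ltn_eqF h2); apply: gs.
Qed.


Fixpoint yseq (cf : nat -> V) (j : nat) : V :=
  if j is j'.+1 then tr (yseq cf j') (cf j') else x.

Definition pathf (gam : V -> nat -> V) (cf : nat -> V) (T i : nat) : V :=
  tr (yseq cf (i %/ T)%N) (gam (cf (i %/ T)%N) (i %% T)%N).

Section PathF.
Variables (gam : V -> nat -> V) (cf : nat -> V) (T D : nat).
Hypotheses (T0 : (0 < T)%N)
  (gam0 : forall j, gam (cf j) 0%N = x) (gamT : forall j, gam (cf j) T = cf j)
  (gamS : forall j t, (t < T)%N -> (gdist (gam (cf j) t) (gam (cf j) t.+1) <= D)%N).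

Lemma pathf_block j : pathf gam cf T (j * T) = yseq cf j.
Proof. by rewrite /pathf mulnK // modnMl gam0 tr_x. Qed.

Lemma pathf_step i : (gdist (pathf gam cf T i) (pathf gam cf T i.+1) <= D)%N.
Proof.
rewrite /pathf divnS // modnS; case: (boolP (T %| i.+1)%N) => Hd /=.
  rewrite add1n gam0 tr_x /= -{2}(gamT (i %/ T)%N) gdist_tr mod_pred_div //.
  have := @gamS (i %/ T)%N T.-1; rewrite prednK //; apply => //.
rewrite add0n gdist_tr; apply: gamS; exact: ltn_pmod.
Qed.
End PathF.


Lemma card_fset_setT (T : finType) : #|` fset_set [set: T]| = #|T|.
Proof.
have -> : fset_set [set: T] = [fset t in enum T]%fset.
  apply/fsetP => t; rewrite in_fset_set; last exact: finite_finset.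
  apply/idP/idP => _; last exact/mem_set.
  by apply/imfsetP; exists t; rewrite ?mem_enum.
by rewrite card_fseq undup_id ?enum_uniq // -cardE.
Qed.

Lemma count_lower (dl Rs : R) D r l T k (A : seq V) :
  (0 < T)%N -> D%:R <= dl -> Rs <= r%:R -> (l <= T * D)%N ->
  uniq A -> (forall a, a \in A -> (gdist x a <= l)%N) ->
  (forall a b, a \in A -> b \in A -> a != b -> (r < gdist a b)%N) ->
  exists S : set {ffun 'I_(k * T).+1 -> V},
   [/\ finite_set S, S `<=` delta_path adj dl x, Defs.separated adj Rs S &
       #|` fset_set S| = (size A ^ k)%N].
Proof.
move=> T0 HD HR HlT uA Al Asep.
have geo a : exists g : nat -> V, (gdist x a <= T * D)%N ->
    [/\ g 0%N = x, g T = a & forall t, (t < T)%N -> (gdist (g t) (g t.+1) <= D)%N].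
  case: (boolP (gdist x a <= T * D)%N) => H; last by exists (fun _ => x).
  have [g Hg] := geo_walk (gdist_walk x a) H; by exists g.
pose gam a := proj1_sig (cid (geo a)).
have gamP a : (gdist x a <= T * D)%N ->
    [/\ gam a 0%N = x, gam a T = a & forall t, (t < T)%N -> (gdist (gam a t) (gam a t.+1) <= D)%N].
  exact: (proj2_sig (cid (geo a))).
set AF := [fset a in A]%fset.
pose cf (c : {ffun 'I_k -> AF}) (j : nat) : V :=
  oapp (fun o : 'I_k => val (c o)) x (insub j).
have cfE c (o : 'I_k) : cf c o = val (c o) by rewrite /cf valK.
have cfA c j : (j < k)%N -> cf c j \in A.
  move=> jk; have := cfE c (Ordinal jk); rewrite /= => ->.
  by have := valP (c (Ordinal jk)); rewrite inE.
have cfB c j : (gdist x (cf c j) <= T * D)%N.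
  rewrite /cf; case: insubP => [u _ _ | _] /=; last by rewrite gdistxx.
  apply: leq_trans (Al _ _) HlT; by have := valP (c u); rewrite inE.
pose P c : {ffun 'I_(k * T).+1 -> V} := [ffun i : 'I_(k * T).+1 => pathf gam (cf c) T i].
have Pi c i : (i <= k * T)%N -> P c (inord i) = pathf gam (cf c) T i.
  by move=> Hi; rewrite ffunE inordK.
have g0 c j : gam (cf c j) 0%N = x by case: (gamP _ (cfB c j)).
have gT c j : gam (cf c j) T = cf c j by case: (gamP _ (cfB c j)).
have gS c j t : (t < T)%N -> (gdist (gam (cf c j) t) (gam (cf c j) t.+1) <= D)%N.
  by case: (gamP _ (cfB c j)) => _ _; apply.
have Pd c : delta_path adj dl x (P c).
  split.
    by rewrite ffunE /= -{1}(mul0n T) (pathf_block T0 (g0 c)).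
  move=> i Hi; rewrite !Pi // ?(ltnW Hi) //; apply: le_trans HD; rewrite ler_nat.
  exact: (pathf_step T0 (g0 c) (gT c) (gS c)).
have sep c c' : c != c' -> exists i : 'I_(k * T).+1, (r < gdist (P c i) (P c' i))%N.
  move=> Hne.
  have : [exists j, c j != c' j].
    apply: contraR Hne => /existsPn H; apply/eqP/ffunP => j; apply/eqP.
    by have := H j; rewrite negbK.
  case/existsP => j0 Hj0.
  have exj : exists j, (j < k)%N && (cf c j != cf c' j).
    exists j0; rewrite ltn_ord /= !cfE; exact: Hj0.
  case: (ex_minnP exj) => j /andP[jk Hj] Hmin.
  have yeq j' : (j' <= j)%N -> yseq (cf c) j' = yseq (cf c') j'.
    elim: j' => [//|j' IH] Hj' /=; rewrite IH ?(ltnW Hj') //.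
    case: (boolP (cf c j' == cf c' j')) => [/eqP->//|Hn].
    have := Hmin j'; rewrite Hn (ltn_trans Hj' jk) => /(_ isT).
    by rewrite leqNgt Hj'.
  have jT : (j.+1 * T <= k * T)%N by rewrite leq_mul2r jk orbT.
  exists (inord (j.+1 * T)).
  rewrite !Pi // !(pathf_block T0 (g0 _)) /= yeq // gdist_tr.
  by apply: Asep => //; apply: cfA.
have sepP c c' : c != c' -> Rs < path_dist adj R (P c) (P c').
  move=> /sep [i Hi]; apply: (le_lt_trans HR); apply: (lt_le_trans _ (le_bigmax _ _ i)).
  by rewrite ltr_nat.
have Pinj : injective P.
  move=> c c' E; apply/eqP; apply/negP => /negP /sep [i].
  by rewrite E gdistxx.
exists (P @` setT); split.
- exact: finite_image finite_finset.
- by move=> p [c _ <-].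
- move=> p q [c _ <-] [c' _ <-] Hpq; apply: sepP; apply/negP => /eqP E.
  by apply: Hpq; rewrite E.
rewrite fset_set_image; last exact: finite_finset.
rewrite card_in_imfset /=; last by move=> c c' _ _; apply: Pinj.
rewrite card_fset_setT card_ffun card_ord -cardfE card_fseq undup_id //.
Qed.


Local Open Scope ereal_scope.

Lemma elog_mono (a b : \bar R) : a <= b -> elog a <= elog b.
Proof.
case: a => [a| |]; case: b => [b| |] //=.
- rewrite lee_fin => ab; case: ifPn => a0; last by rewrite leNye.
  have b0 : (0 < b)%R by apply: lt_le_trans a0 ab.
  by rewrite b0 lee_fin ler_ln.
- by move=> _; rewrite leey.
all: by move=> _; rewrite ?leNye ?leey.
Qed.

Lemma limn_esup_le (u : (\bar R)^nat) b : (forall n, u n <= b) -> limn_esup u <= b.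
Proof.
move=> H; rewrite limn_esup_lim; apply: lime_le; first exact: is_cvg_esups.
by apply: nearW => n; apply: ge_ereal_sup => _ [k _ <-]; exact: H.
Qed.

Lemma limn_esup_ge (u : (\bar R)^nat) b :
  (forall N, exists2 n, (N <= n)%N & b <= u n) -> b <= limn_esup u.
Proof.
move=> H; rewrite limn_esup_lim; apply: lime_ge; first exact: is_cvg_esups.
apply: nearW => N; have [n Nn Hn] := H N; apply: le_trans Hn _.
by apply: ereal_sup_ubound; exists n.
Qed.

Lemma limn_esup_mono (u v : (\bar R)^nat) : (forall n, u n <= v n) ->
  limn_esup u <= limn_esup v.
Proof.
move=> H; rewrite !limn_esup_lim; apply: lee_lim; try exact: is_cvg_esups.
apply: nearW => n; apply: ge_ereal_sup => _ [k Hk <-].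
by apply: le_trans (H k) _; apply: ereal_sup_ubound; exists k.
Qed.

Lemma s_mono n (dl dl' Rs Rs' : R) : (dl <= dl')%R -> (Rs' <= Rs)%R ->
  s_count adj n Rs dl x <= s_count adj n Rs' dl' x.
Proof.
move=> Hd HR; apply: le_ereal_sup => _ [S [Sf Sd Ss] <-]; exists S => //; split => //.
- by move=> p /Sd [H1 H2]; split => // i Hi; apply: le_trans (H2 i Hi) Hd.
- by move=> p q Sp Sq pq; apply: le_lt_trans HR (Ss p q Sp Sq pq).
Qed.

Lemma s_ge1 n (Rs dl : R) : (0 <= dl)%R -> 1 <= s_count adj n Rs dl x.
Proof.
move=> d0; apply: ereal_sup_ubound; exists [set [ffun _ => x]]; last first.
  by rewrite fset_set1 cardfs1.
split.
- exact: finite_set1.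
- move=> p ->; split; first by rewrite ffunE.
  by move=> i _; rewrite !ffunE gdistxx.
- by move=> p q -> ->.
Qed.

Definition Fe (dl Rs : R) : \bar R :=
  limn_esup (fun n : nat => ((n%:R)^-1)%:E * elog (s_count adj n Rs dl x)).

Lemma Fe_mono (dl dl' Rs Rs' : R) : (dl <= dl')%R -> (Rs' <= Rs)%R ->
  Fe dl Rs <= Fe dl' Rs'.
Proof.
move=> Hd HR; apply: limn_esup_mono => n; apply: lee_wpmul2l.
  by rewrite lee_fin invr_ge0.
exact/elog_mono/s_mono.
Qed.

Definition Ge (dl : R) : \bar R := ereal_inf (range (Fe dl)).

Lemma coarseE : coarse_entropy adj R x = ereal_sup (range Ge).
Proof.
rewrite /coarse_entropy.
have -> : (fun delta : R => lim ((fun Rs : R =>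
     limn_esup (fun n : nat => ((n%:R)^-1)%:E * elog (s_count adj n Rs delta x))) @ +oo%R)) = Ge.
  apply/funext => dl; apply: cvg_lim => //; apply: nonincreasing_cvge.
  by move=> a b ab; apply: Fe_mono.
apply: cvg_lim => //; apply: nondecreasing_cvge => a b ab.
apply: le_ereal_inf_tmp => _ [Rs _ <-]; apply: le_trans _ (Fe_mono ab (lexx Rs)).
by apply: ereal_inf_lbound; exists Rs.
Qed.


Lemma Fe_ge0 (dl Rs : R) : (0 <= dl)%R -> 0 <= Fe dl Rs.
Proof.
move=> d0; apply: limn_esup_ge => N; exists N => //.
apply: mule_ge0; first by rewrite lee_fin invr_ge0.
have := elog_mono (s_ge1 N Rs d0); rewrite /= ltr01 ln1; exact.
Qed.

Lemma Fe_upper D m (dl : R) : (0 < m)%N -> (dl <= D%:R)%R ->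
  Fe dl ((m.-1 * D).*2%:R) <= (ln ((bc x (m * D)).+1%:R) / m%:R)%:E.
Proof.
move=> m0 HD; apply: limn_esup_le => n.
set L := ln ((bc x (m * D)).+1%:R).
have L0 : (0 <= L)%R by apply: ln_ge0; rewrite ler1n.
set b := ((bc x (m * D)).+1 ^ (n %/ m))%N.
have sb : s_count adj n ((m.-1 * D).*2%:R) dl x <= (b%:R)%:E.
  apply: ge_ereal_sup => _ [S [Sf Sd Ss] <-].
  by rewrite lee_fin ler_nat; apply: (count_upper m0 HD).
have eb : elog (s_count adj n ((m.-1 * D).*2%:R) dl x) <= (L *+ (n %/ m))%:E.
  apply: le_trans (elog_mono sb) _.
  rewrite /= ltr0n expn_gt0 /= lee_fin /b natrX lnXn //.
clearbody b; clear sb; case: n eb => [|n] eb.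
  by rewrite invr0 mul0e lee_fin divr_ge0.
apply: le_trans (lee_wpmul2l _ eb) _; first by rewrite lee_fin invr_ge0.
rewrite -EFinM lee_fin -(mulr_natr L) mulrCA ler_wpM2l //.
rewrite mulrC ler_pdivrMr ?ltr0n // ler_pdivlMl ?ltr0n // -natrM ler_nat.
by rewrite mulnC leq_trunc_div.
Qed.


Lemma small_growth D (e : R) : (0 < D)%N -> (0 < e)%R ->
  (fun l : nat => (ln (@ball_card V adj R x l) / l%:R)%R) @ \oo --> (0%R : R) ->
  exists2 m, (0 < m)%N & (ln ((bc x (m * D)).+1%:R) / m%:R <= e)%R.
Proof.
move=> D0 e0 H0.
have e2 : (0 < e / (2 * D%:R))%R by rewrite divr_gt0 // mulr_gt0 // ltr0n.
move/cvgrPdist_le: H0 => /(_ _ e2) [N _ HN].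
set M2 := (Num.trunc (2 * ln 2 / e)).+1.
set m := maxn (maxn N 1) M2.
have mN : (N <= m)%N by rewrite /m; lia.
have m1 : (0 < m)%N by rewrite /m; lia.
have mM : (M2 <= m)%N by rewrite /m; lia.
exists m => //.
have hl : (N <= m * D)%N by apply: leq_trans mN _; rewrite leq_pmulr.
have := HN _ hl; rewrite /= sub0r normrN.
rewrite /ball_card -/(bc x (m * D)).
set B := bc x (m * D).
have B1 : (1 <= B)%N by apply: bc_ge1.
set lb := ln B%:R.
have lb0 : (0 <= lb)%R by apply: ln_ge0; rewrite ler1n.
move=> H.
have H' : (lb <= e * m%:R / 2)%R.
  have : (lb / (m * D)%:R <= e / (2 * D%:R))%R by apply: le_trans (ler_norm _) H.
  rewrite ler_pdivrMr ?ltr0n ?muln_gt0 ?m1 ?D0 // natrM => h; apply: (le_trans h).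
  rewrite le_eqVlt; apply/orP; left; apply/eqP; field.
  by rewrite pnatr_eq0 -lt0n.
have Hm2 : (2 * ln 2 <= e * m%:R)%R.
  rewrite [X in (_ <= X)%R]mulrC -ler_pdivrMr //; apply: ltW; apply: lt_le_trans (truncnS_gt _) _.
  by rewrite ler_nat.
have l2 : (ln (B.+1)%:R <= ln 2 + lb)%R.
  rewrite -lnM ?posrE ?ltr0n //; rewrite ler_ln ?posrE ?ltr0n ?mulr_gt0 ?ltr0n //.
  by rewrite -natrM ler_nat mul2n -addnn -addn1 leq_add2l.
rewrite ler_pdivrMr ?ltr0n //; lra.
Qed.


Lemma part1 :
  (fun l : nat => (ln (@ball_card V adj R x l) / l%:R)%R) @ \oo --> (0%R : R) ->
  coarse_entropy adj R x = 0.
Proof.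
move=> H0; rewrite coarseE; apply/eqP; rewrite eq_le; apply/andP; split.
- apply: ge_ereal_sup => _ [dl _ <-].
  apply/lee_addgt0Pr => e e0; rewrite add0e.
  set D := (Num.trunc `|dl|).+1.
  have D0 : (0 < D)%N by [].
  have HD : (dl <= D%:R)%R by apply: le_trans (ler_norm dl) (ltW (truncnS_gt _)).
  have [m m0 Hm] := small_growth D0 e0 H0.
  apply: ge_ereal_inf; exists (Fe dl ((m.-1 * D).*2%:R)); first by exists ((m.-1 * D).*2%:R).
  by apply: le_trans (Fe_upper m0 HD) _; rewrite lee_fin.
- apply: le_trans (ereal_sup_ubound _); last by exists 1%R.
  by apply: le_ereal_inf_tmp => _ [Rs _ <-]; apply: Fe_ge0.
Qed.


Lemma Fe_lower (c : R) D : (0 < c)%R -> (0 < D)%N ->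
  (forall N, exists l, (N <= l)%N /\ (c * l%:R < ln (bc x l)%:R)%R) ->
  forall Rs, ((c * D%:R / 2)%R)%:E <= Fe D%:R Rs.
Proof.
move=> c0 D0 Hc Rs.
set r := (Num.trunc `|Rs|).+1.
have HR : (Rs <= r%:R)%R by apply: le_trans (ler_norm Rs) (ltW (truncnS_gt _)).
pose br : R := ln (bc x r)%:R.
have br0 : (0 <= br)%R by apply: ln_ge0; rewrite ler1n bc_ge1.
pose N0 := (Num.trunc ((2 * br + c * D%:R) / c)).+1.
have [l [Nl Hl]] := Hc N0.
have Hl2 : (2 * br + c * D%:R < c * l%:R)%R.
  rewrite [X in (_ < X)%R]mulrC -ltr_pdivrMr //; apply: lt_le_trans (truncnS_gt _) _.
  by rewrite ler_nat.
set T := (l %/ D).+1.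
have T0 : (0 < T)%N by [].
have lT : (l <= T * D)%N by apply: ltnW; apply: ltn_ceil.
have TD : (T * D <= l + D)%N by rewrite /T mulSn addnC leq_add2r leq_trunc_div.
have [A [uA sA sepA covA]] := net_exists (enum_fset (fset_set (ball_g adj x l))) r.
have Al a : a \in A -> (gdist x a <= l)%N.
  move=> /sA Ha; have : a \in fset_set (ball_g adj x l) by [].
  by rewrite in_fset_set ?inE //; apply: ball_finite.
have cov : (bc x l <= size A * bc x r)%N.
  by apply: cover_card => b Hb; apply: covA.
set N := size A.
have N1 : (0 < N)%N.
  rewrite lt0n; apply/eqP => N0'; move: cov (bc_ge1 x l); rewrite -/N N0' mul0n; lia.
have HN : (c * D%:R / 2 <= ln N%:R / T%:R)%R.
  have h1 : (ln (bc x l)%:R <= ln N%:R + br)%R.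
    rewrite -lnM ?posrE ?ltr0n ?bc_ge1 //.
    by rewrite ler_ln ?posrE ?ltr0n ?mulr_gt0 ?ltr0n ?bc_ge1 // -natrM ler_nat.
  have h2 : (c * (T * D)%:R <= c * (l + D)%:R)%R by apply: ler_wpM2l; [exact: ltW | rewrite ler_nat].
  rewrite ler_pdivlMr ?ltr0n //.
  have -> : (c * D%:R / 2 * T%:R = c * (T * D)%:R / 2)%R by rewrite natrM; field.
  move: h2 Hl2 Hl h1; rewrite natrD mulrDr.
  move: (c * (T * D)%:R)%R (c * l%:R)%R (c * D%:R)%R => X3 X1 X2; lra.
apply: limn_esup_ge => n0; set k := n0.+1; exists (k * T)%N.
  by apply: leq_trans (leqnSn n0) _; rewrite leq_pmulr.
have [S [Sf Sd Ss Sc]] := count_lower k T0 (lexx (D%:R : R)) HR lT uA Al sepA.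
have s1 : ((N ^ k)%:R)%:E <= s_count adj (k * T) Rs D%:R x.
  by apply: ereal_sup_ubound; exists S; rewrite ?Sc.
apply: le_trans _ (lee_wpmul2l _ (elog_mono s1)); last by rewrite lee_fin invr_ge0.
rewrite /= ltr0n expn_gt0 N1 /= -EFinM lee_fin natrX lnXn ?ltr0n //.
have -> : ((k * T)%:R^-1 * (ln N%:R *+ k) = ln N%:R / T%:R :> R)%R.
  rewrite natrM -mulr_natr; field.
  by rewrite !pnatr_eq0 -!lt0n T0.
exact: HN.
Qed.


Lemma part2 :
  0 < limn_esup (fun l : nat => ((ln (@ball_card V adj R x l) / l%:R)%R)%:E) ->
  coarse_entropy adj R x = +oo.
Proof.
set u := (fun l : nat => ((ln (@ball_card V adj R x l) / l%:R)%R)%:E) => Hpos.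
have [c c0 Hcu] : exists2 c : R, (0 < c)%R & c%:E < limn_esup u.
  move: Hpos; case: (limn_esup u) => [y| |] Hy.
  - exists (y / 2)%R; first by rewrite divr_gt0 // -lte_fin.
    by rewrite lte_fin ltr_pdivrMr // ltr_pMr // ?ltr1n // -lte_fin.
  - by exists 1%R; rewrite ?ltr01 ?ltey.
  - by rewrite ltNge leNye in Hy.
have Hc N : exists l, (N <= l)%N /\ (c * l%:R < ln (bc x l)%:R)%R.
  have : c%:E < esups u N.
    apply: lt_le_trans Hcu _; rewrite limn_esup_lim; apply: lime_le.
      exact: is_cvg_esups.
    by exists N => // n /= Nn; apply: nonincreasing_esups.
  move/ereal_sup_gt => [_ [l Nl <-]] Hl; exists l; split => //.
  move: Hl; rewrite /u lte_fin; case: l {Nl} => [|l] Hl.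
    by move: Hl; rewrite invr0 mulr0 => /(lt_trans c0); rewrite ltxx.
  by rewrite -ltr_pdivlMr ?ltr0n.
rewrite coarseE.
have Hs D : (0 < D)%N -> ((c * D%:R / 2)%R)%:E <= ereal_sup (range Ge).
  move=> D0; apply: le_trans (ereal_sup_ubound _); last by exists D%:R.
  by apply: le_ereal_inf_tmp => _ [Rs _ <-]; apply: Fe_lower.
move: Hs; case: (ereal_sup (range Ge)) => [y| |] Hs //.
- exfalso.
  set D := (Num.trunc (2 * `|y| / c)).+1.
  have := Hs D isT; rewrite lee_fin; apply/negP; rewrite -ltNge.
  apply: le_lt_trans (ler_norm y) _.
  have := truncnS_gt (2 * `|y| / c); rewrite -/D ltr_pdivrMr // => h.
  rewrite ltr_pdivlMr //; lra.
- by have := Hs 1%N isT; rewrite leNgt ltNye.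
Qed.

End G.
End Aux.

Theorem mainTheorem17 (R : realType) (V : choiceType) (adj : V -> V -> Prop) (x : V) :
  simple_graph adj -> graph_connected adj -> locally_finite adj ->
  vertex_transitive adj ->
  ((fun l : nat => ln (@ball_card V adj R x l) / l%:R) @ \oo --> (0 : R) ->
     @coarse_entropy V adj R x = 0%E) /\
  ((0 < limn_esup (fun l : nat => (ln (@ball_card V adj R x l) / l%:R)%:E))%E ->
     @coarse_entropy V adj R x = +oo%E).
Proof.
move=> [symm _] conn lf vt; split.
- exact: Aux.part1.
- exact: Aux.part2.
Qed.
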